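(* Let $L$ be a split regular Hom-Lie color algebra with symmetric root system $\Lambda$, and let $\alpha,\gamma\in\Lambda$ with $\gamma\notin\Lambda_\alpha$. Then $[L_{\Lambda_\alpha},L_{\Lambda_\gamma}]=0$.
   Context: Let $\mathbb{K}$ be a field and $\Gamma$ an abelian group. A bi-character is $\varepsilon:\Gamma\times\Gamma\to\mathbb{K}\setminus\{0\}$ with $\varepsilon(a,b)\varepsilon(b,a)=1$, $\varepsilon(a,b+c)=\varepsilon(a,b)\varepsilon(a,c)$, $\varepsilon(a+b,c)=\varepsilon(a,c)\varepsilon(b,c)$. A Hom-Lie color algebra $(L,[\cdot,\cdot],\phi,\varepsilon)$ is a $\Gamma$-graded space $L=\bigoplus_gL_g$ with bilinear $[\cdot,\cdot]$, $[L_g,L_h]\subset L_{g+h}$, linear $\phi$ with $\phi(L_g)\subset L_g$, $\phi([x,y])=[\phi x,\phi y]$, such that for homogeneous $x,y,z$ of degrees $\bar x,\bar y,\bar z$: $[x,y]=-\varepsilon(\bar x,\bar y)[y,x]$ and $\varepsilon(\bar z,\bar x)[\phi(x),[y,z]]+\varepsilon(\bar x,\bar y)[\phi(y),[z,x]]+\varepsilon(\bar y,\bar z)[\phi(z),[x,y]]=0$; regular means $\phi$ bijective. A subalgebra is a graded subspace $A$ with $[A,A]\subset A$, $\phi(A)=A$; abelian if $[A,A]=0$. $H=\bigoplus_gH_g$ is a maximal abelian graded subalgebra (so $\phi(H_0)=H_0$). For linear $\alpha:H_0\to\mathbb{K}$, $L_\alpha=\{v:[h,v]=\alpha(h)\phi(v)\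 \forall h\in H_0\}$; $\Lambda=\{\alpha\in H_0^*\setminus\{0\}:L_\alpha\neq0\}$; $L$ is split if $L=H\oplus(\bigoplus_{\alpha\in\Lambda}L_\alpha)$. $\Lambda$ is symmetric if $\alpha\in\Lambda\Rightarrow-\alpha\in\Lambda$. For $z\in\mathbb{Z}$, $\alpha\phi^{z}:=\alpha\circ(\phi|_{H_0})^{z}$; $\mathbb{N}=\{0,1,2,\dots\}$. Connection: for $\alpha,\beta\in\Lambda$, $\alpha$ is connected to $\beta$ if there exist $k\ge1$ and $\alpha_1,\dots,\alpha_k\in\Lambda$ such that: if $k=1$, $\alpha_1\in\{\alpha\phi^{-n}:n\in\mathbb{N}\}\cap\{\pm\beta\phi^{-m}:m\in\mathbb{N}\}$; if $k\ge2$, then $\alpha_1\in\{\alpha\phi^{-n}:n\in\mathbb{N}\}$, for each $i=1,\dots,k-2$ one has $\alpha_1\phi^{-i}+\alpha_2\phi^{-i}+\alpha_3\phi^{-i+1}+\cdots+\alpha_{i+1}\phi^{-1}\in\Lambda$, and $\alpha_1\phi^{-k+1}+\alpha_2\phi^{-k+1}+\alpha_3\phi^{-k+2}+\cdots+\alpha_k\phi^{-1}\in\{\pm\beta\phi^{-m}:m\in\mathbb{N}\}$. Connectedness $\sim$ is an equivalence relation on $\Lambda$; $\Lambda_\alpha:=\{\beta\in\Lambda:\beta\sim\alpha\}$. Define $H_{\Lambda_\alpha}:=\mathrm{span}_{\mathbb{K}}\{[L_\beta,L_{-\beta}]:\beta\in\Lambda_\alpha\}\subset H$, $V_{\Lambda_\alpha}:=\bigoplus_{\beta\in\Lambda_\alpha}L_\beta$,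 and $L_{\Lambda_\alpha}:=H_{\Lambda_\alpha}\oplus V_{\Lambda_\alpha}$. *)

(* Defs.v *)
From HB Require Import structures.
From mathcomp Require Import all_boot all_order all_algebra.
Set Implicit Arguments. Unset Strict Implicit. Unset Printing Implicit Defensive.
Import GRing.Theory.
Local Open Scope ring_scope.

(* Data of a (Hom-Lie color) algebra over the field K, graded by the abelian
   group G, on the K-vector space L.  [Lg g] is the homogeneous component L_g
   (as a predicate on L); [phiinv] is the (intended) inverse of [phi]. *)
Record HLCdata (K : fieldType) (G : zmodType) (L : lmodType K) := HLCData {
  eps : G -> G -> K;
  br : L -> L -> L;
  phi : L -> L;
  phiinv : L -> L;
  Lg : G -> L -> Prop }.

Section Defs.
Context {K : fieldType} {G : zmodType} {L : lmodType K}.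

Definition bicharacter (e : G -> G -> K) : Prop :=
  (forall a b, e a b != 0) /\
  (forall a b, e a b * e b a = 1) /\
  (forall a b c, e a (b + c) = e a b * e a c) /\
  (forall a b c, e (a + b) c = e a c * e b c).

Definition subspace (A : L -> Prop) : Prop :=
  A 0 /\ forall (c : K) x y, A x -> A y -> A (c *: x + y).

Definition hdecomp (S : @HLCdata K G L) (A : L -> Prop) (x : L) : Prop :=
  exists n (g : 'I_n -> G) (v : 'I_n -> L),
    injective g /\ (forall i, Lg S (g i) (v i) /\ A (v i)) /\
    x = \sum_(i < n) v i.

Definition graded_space (S : @HLCdata K G L) : Prop :=
  (forall g, subspace (Lg S g)) /\
  (forall x, hdecomp S (fun _ => True) x) /\
  (forall n (g : 'I_n -> G) (v : 'I_n -> L), injective g ->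
     (forall i, Lg S (g i) (v i)) -> \sum_(i < n) v i = 0 -> forall i, v i = 0).

Definition HomLieColor (S : @HLCdata K G L) : Prop :=
  bicharacter (eps S) /\
  graded_space S /\
  (forall (c : K) x y z, br S (c *: x + y) z = c *: br S x z + br S y z) /\
  (forall (c : K) x y z, br S z (c *: x + y) = c *: br S z x + br S z y) /\
  (forall (c : K) x y, phi S (c *: x + y) = c *: phi S x + phi S y) /\
  (forall g h x y, Lg S g x -> Lg S h y -> Lg S (g + h) (br S x y)) /\
  (forall g x, Lg S g x -> Lg S g (phi S x)) /\
  (forall x y, phi S (br S x y) = br S (phi S x) (phi S y)) /\
  (forall a b x y, Lg S a x -> Lg S b y ->
     br S x y = - (eps S a b *: br S y x)) /\
  (forall a b c x y z, Lg S a x -> Lg S b y -> Lg S c z ->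
     eps S c a *: br S (phi S x) (br S y z) +
     eps S a b *: br S (phi S y) (br S z x) +
     eps S b c *: br S (phi S z) (br S x y) = 0).

Definition regular (S : @HLCdata K G L) : Prop :=
  cancel (phi S) (phiinv S) /\ cancel (phiinv S) (phi S).

Definition graded_subspace (S : @HLCdata K G L) (A : L -> Prop) : Prop :=
  subspace A /\ forall x, A x -> hdecomp S A x.

Definition subalgebra (S : @HLCdata K G L) (A : L -> Prop) : Prop :=
  graded_subspace S A /\
  (forall x y, A x -> A y -> A (br S x y)) /\
  (forall x, A x -> A (phi S x)) /\
  (forall y, A y -> exists x, A x /\ phi S x = y).

Definition abelian (S : @HLCdata K G L) (A : L -> Prop) : Prop :=
  forall x y, A x -> A y -> br S x y = 0.

Definition max_abelian_subalgebra (S : @HLCdata K G L) (H : L -> Prop) : Prop :=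
  subalgebra S H /\ abelian S H /\
  forall B, subalgebra S B -> abelian S B -> (forall x, H x -> B x) ->
    forall x, B x -> H x.

Definition H0 (S : @HLCdata K G L) (H : L -> Prop) (x : L) : Prop :=
  H x /\ Lg S 0 x.

(* A linear form on H_0 is represented by a function L -> K, linear on H_0;
   two such represent the same form iff they agree on H_0. *)
Definition lin_on_H0 (S : @HLCdata K G L) H (a : L -> K) : Prop :=
  forall (c : K) x y, H0 S H x -> H0 S H y -> a (c *: x + y) = c * a x + a y.

Definition agree (S : @HLCdata K G L) H (a b : L -> K) : Prop :=
  forall h, H0 S H h -> a h = b h.

Definition rootspace (S : @HLCdata K G L) H (a : L -> K) (v : L) : Prop :=
  forall h, H0 S H h -> br S h v = a h *: phi S v.

Definition is_root (S : @HLCdata K G L) H (a : L -> K) : Prop :=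
  lin_on_H0 S H a /\ (exists h, H0 S H h /\ a h != 0) /\
  (exists v, v != 0 /\ rootspace S H a v).

Definition symmetric_roots (S : @HLCdata K G L) H : Prop :=
  forall a, is_root S H a -> is_root S H (fun h => - a h).

Definition split_alg (S : @HLCdata K G L) (H : L -> Prop) : Prop :=
  (forall x, exists h n (a : 'I_n -> L -> K) (v : 'I_n -> L),
     H h /\ (forall i, is_root S H (a i) /\ rootspace S H (a i) (v i)) /\
     x = h + \sum_(i < n) v i) /\
  (forall h n (a : 'I_n -> L -> K) (v : 'I_n -> L),
     H h -> (forall i, is_root S H (a i) /\ rootspace S H (a i) (v i)) ->
     (forall i j, i != j -> ~ agree S H (a i) (a j)) ->
     h + \sum_(i < n) v i = 0 -> h = 0 /\ forall i, v i = 0).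

Definition phipow (S : @HLCdata K G L) (a : L -> K) (n : nat) : L -> K :=
  fun h => a (iter n (phiinv S) h).

Definition in_orbit (S : @HLCdata K G L) H (a b : L -> K) : Prop :=
  exists n, agree S H a (phipow S b n).

Definition in_pm_orbit (S : @HLCdata K G L) H (a b : L -> K) : Prop :=
  exists m, agree S H a (phipow S b m) \/
            agree S H a (fun h => - phipow S b m h).

(* al_1 phi^{-i} + al_2 phi^{-i} + al_3 phi^{-i+1} + ... + al_{i+1} phi^{-1} *)
Definition conn_sum (S : @HLCdata K G L) (al : nat -> L -> K) (i : nat) : L -> K :=
  fun h => phipow S (al 1%N) i h +
           \sum_(2 <= j < i.+2) phipow S (al j) (i.+2 - j) h.

Definition connected (S : @HLCdata K G L) H (a b : L -> K) : Prop :=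
  exists (k : nat) (al : nat -> L -> K),
    (1 <= k)%N /\ (forall j, (1 <= j <= k)%N -> is_root S H (al j)) /\
    ((k = 1%N /\ in_orbit S H (al 1%N) a /\ in_pm_orbit S H (al 1%N) b) \/
     ((2 <= k)%N /\ in_orbit S H (al 1%N) a /\
      (forall i, (1 <= i <= k - 2)%N -> is_root S H (conn_sum S al i)) /\
      in_pm_orbit S H (conn_sum S al (k - 1)) b)).

Definition root_class (S : @HLCdata K G L) H (a b : L -> K) : Prop :=
  is_root S H b /\ connected S H b a.

Definition spanP (P : L -> Prop) (x : L) : Prop :=
  exists n (c : 'I_n -> K) (v : 'I_n -> L),
    (forall i, P (v i)) /\ x = \sum_(i < n) c i *: v i.

Definition H_class (S : @HLCdata K G L) H (a : L -> K) : L -> Prop :=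
  spanP (fun w => exists b x y, root_class S H a b /\ rootspace S H b x /\
           rootspace S H (fun h => - b h) y /\ w = br S x y).

Definition V_class (S : @HLCdata K G L) H (a : L -> K) : L -> Prop :=
  spanP (fun w => exists b, root_class S H a b /\ rootspace S H b w).

Definition L_class (S : @HLCdata K G L) H (a : L -> K) (x : L) : Prop :=
  exists h v, H_class S H a h /\ V_class S H a v /\ x = h + v.

End Defs.

(* Main.v *)
Require Import Defs.
From HB Require Import structures.
From mathcomp Require Import all_boot all_order all_algebra.
From Stdlib Require Import Classical FunctionalExtensionality.
From mathcomp Require Import zify.
Set Implicit Arguments. Unset Strict Implicit. Unset Printing Implicit Defensive.
Import GRing.Theory.
Local Open Scope ring_scope.

Section Proof.
Variables (K : fieldType) (G : zmodType) (L : lmodType K).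
Variables (S : @HLCdata K G L) (H : L -> Prop).
Hypothesis HLC : HomLieColor S.
Hypothesis REG : regular S.
Hypothesis MAX : max_abelian_subalgebra S H.
Hypothesis SYMR : symmetric_roots S H.

Local Notation br := (br S).
Local Notation phi := (phi S).
Local Notation phiinv := (phiinv S).
Local Notation Lg := (Lg S).
Local Notation eps := (eps S).

Lemma bich : bicharacter eps. Proof. by case: HLC. Qed.
Lemma grad : graded_space S. Proof. by case: HLC => _ []. Qed.
Lemma brL c x y z : br (c *: x + y) z = c *: br x z + br y z.
Proof. by case: HLC => _ [_ [-> _]]. Qed.
Lemma brR c x y z : br z (c *: x + y) = c *: br z x + br z y.
Proof. by case: HLC => _ [_ [_ [-> _]]]. Qed.
Lemma phiL c x y : phi (c *: x + y) = c *: phi x + phi y.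
Proof. by case: HLC => _ [_ [_ [_ [-> _]]]]. Qed.
Lemma brdeg g h x y : Lg g x -> Lg h y -> Lg (g + h) (br x y).
Proof. by case: HLC => _ [_ [_ [_ [_ [D _]]]]]; apply: D. Qed.
Lemma phideg g x : Lg g x -> Lg g (phi x).
Proof. by case: HLC => _ [_ [_ [_ [_ [_ [D _]]]]]]; apply: D. Qed.
Lemma phibr x y : phi (br x y) = br (phi x) (phi y).
Proof. by case: HLC => _ [_ [_ [_ [_ [_ [_ [D _]]]]]]]; apply: D. Qed.
Lemma skew a b x y : Lg a x -> Lg b y -> br x y = - (eps a b *: br y x).
Proof. by case: HLC => _ [_ [_ [_ [_ [_ [_ [_ [D _]]]]]]]]; apply: D. Qed.
Lemma jac a b c x y z : Lg a x -> Lg b y -> Lg c z ->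
     eps c a *: br (phi x) (br y z) +
     eps a b *: br (phi y) (br z x) +
     eps b c *: br (phi z) (br x y) = 0.
Proof. by case: HLC => _ [_ [_ [_ [_ [_ [_ [_ [_ D]]]]]]]]; apply: D. Qed.
Lemma phiK : cancel phi phiinv. Proof. by case: REG. Qed.
Lemma phiinvK : cancel phiinv phi. Proof. by case: REG. Qed.

Lemma eps_nz a b : eps a b != 0. Proof. by case: bich => ->. Qed.
Lemma eps_sym a b : eps a b * eps b a = 1. Proof. by case: bich => _ [->]. Qed.
Lemma eps0l a : eps 0 a = 1.
Proof.
case: bich => nz [_ [_ E]].
have e := E 0 0 a; rewrite addr0 in e.
have : eps 0 a * (eps 0 a - 1) = 0 by rewrite mulrBr mulr1 -e subrr.
by move/eqP; rewrite mulf_eq0 (negbTE (nz _ _)) subr_eq0 => /eqP.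
Qed.
Lemma eps0r a : eps a 0 = 1.
Proof. by have := eps_sym a 0; rewrite eps0l mulr1. Qed.

Section Lin.
Variable f : L -> L.
Hypothesis fL : forall c x y, f (c *: x + y) = c *: f x + f y.
Lemma lin0 : f 0 = 0.
Proof. by have := fL (-1) 0 0; rewrite scaler0 addr0 scaleN1r addrC subrr. Qed.
Lemma linD x y : f (x + y) = f x + f y.
Proof. by rewrite -[x]scale1r fL !scale1r. Qed.
Lemma linZ c x : f (c *: x) = c *: f x.
Proof. by rewrite -[c *: x]addr0 fL lin0 addr0. Qed.
Lemma linN x : f (- x) = - f x.
Proof. by rewrite -scaleN1r linZ scaleN1r. Qed.
Lemma linB x y : f (x - y) = f x - f y.
Proof. by rewrite linD linN. Qed.
Lemma lin_sum n (F : 'I_n -> L) : f (\sum_(i < n) F i) = \sum_(i < n) f (F i).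
Proof.
apply: (big_rec2 (fun a b => f a = b)); first exact: lin0.
by move=> i a b _ <-; rewrite linD.
Qed.
End Lin.

Lemma phi_inj : injective phi. Proof. exact: can_inj phiK. Qed.

Lemma phiinvL c x y : phiinv (c *: x + y) = c *: phiinv x + phiinv y.
Proof. apply: phi_inj. rewrite phiinvK phiL !phiinvK. done. Qed.

Lemma brl0 z : br 0 z = 0. Proof. exact: (lin0 (fun c x y => brL c x y z)). Qed.
Lemma brr0 z : br z 0 = 0. Proof. exact: (lin0 (fun c x y => brR c x y z)). Qed.

Lemma sub_Lg g : subspace (Lg g). Proof. by case: grad => A _; apply: A. Qed.
Lemma Lg0 g : Lg g 0. Proof. by case: (sub_Lg g). Qed.
Lemma LgL g c x y : Lg g x -> Lg g y -> Lg g (c *: x + y).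
Proof. by case: (sub_Lg g) => _; apply. Qed.
Lemma LgD g x y : Lg g x -> Lg g y -> Lg g (x + y).
Proof. by move=> *; rewrite -[x]scale1r; apply: LgL. Qed.
Lemma LgZ g c x : Lg g x -> Lg g (c *: x).
Proof. by move=> *; rewrite -[_ *: _]addr0; apply: LgL => //; apply: Lg0. Qed.
Lemma Lgsum g n (F : 'I_n -> L) : (forall i, Lg g (F i)) -> Lg g (\sum_(i < n) F i).
Proof.
move=> HF; apply: (big_rec (Lg g)); first exact: Lg0.
by move=> i x _ Hx; apply: LgD.
Qed.

Lemma graded_uniq n (g : 'I_n -> G) (v : 'I_n -> L) : injective g ->
     (forall i, Lg (g i) (v i)) -> \sum_(i < n) v i = 0 -> forall i, v i = 0.
Proof. by case: grad => _ [_]; apply. Qed.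

Lemma hdec x : exists n (g : 'I_n -> G) (v : 'I_n -> L),
    injective g /\ (forall i, Lg (g i) (v i)) /\ x = \sum_(i < n) v i.
Proof.
case: grad => _ [D _]; have [n [g [v [I [Hv E]]]]] := D x.
by exists n, g, v; split=> //; split=> // i; case: (Hv i).
Qed.


Lemma phiinv_Lg g y : Lg g y -> Lg g (phiinv y).
Proof.
move=> Hy; have [n [d [v [I [Hv E]]]]] := hdec (phiinv y).
have Ey : y = \sum_(i < n) phi (v i) by rewrite -(lin_sum phiL) -E phiinvK.
case: (pickP (fun i => d i == g)) => [i0 /eqP di0 | nog].
- pose w i := phi (v i) - (if i == i0 then y else 0).
  have Hw : forall i, Lg (d i) (w i).
    move=> i; rewrite /w; apply: LgD; first exact: phideg.
    case: eqP => [->|_]; rewrite ?di0; first by rewrite -scaleN1r; apply: LgZ.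
    by rewrite oppr0; apply: Lg0.
  have : \sum_(i < n) w i = 0.
    rewrite /w sumrB -Ey (bigD1 i0) //= eqxx big1 ?addr0 ?subrr //.
    by move=> i /negbTE ->.
  move/(graded_uniq I Hw) => W.
  have vi : forall i, i != i0 -> v i = 0.
    move=> i ni; have := W i; rewrite /w (negbTE ni) subr0.
    by move=> e; apply: phi_inj; rewrite e (lin0 phiL).
  rewrite E (bigD1 i0) //= big1 ?addr0; first by rewrite -di0.
  by move=> i; apply: vi.
- pose D (i : 'I_n.+1) := if unlift ord_max i is Some j then d j else g.
  pose W (i : 'I_n.+1) := if unlift ord_max i is Some j then phi (v j) else - y.
  have wid : forall i : 'I_n, widen_ord (leqnSn n) i = lift ord_max i.
    by move=> i; apply: val_inj; rewrite /= /bump leqNgt ltn_ord.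
  have HI : injective D.
    move=> i j; rewrite /D.
    case: unliftP => [i' ->|->]; case: unliftP => [j' ->|->] //.
    + by move/I => ->.
    + by move=> e; have := nog i'; rewrite e eqxx.
    + by move=> e; have := nog j'; rewrite -e eqxx.
  have HW : forall i, Lg (D i) (W i).
    move=> i; rewrite /D /W; case: unliftP => [j _|_]; first exact: phideg.
    by rewrite -scaleN1r; apply: LgZ.
  have : \sum_(i < n.+1) W i = 0.
    rewrite big_ord_recr /=.
    have -> : W ord_max = - y by rewrite /W unlift_none.
    under eq_bigr => i _ do rewrite wid /W liftK.
    by rewrite -Ey subrr.
  move/(graded_uniq HI HW) => Z.
  rewrite E big1; first exact: Lg0. move=> i _.
  have := Z (lift ord_max i); rewrite /W liftK => e.
  by apply: phi_inj; rewrite e (lin0 phiL).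
Qed.

Local Notation H0 := (H0 S H).
Local Notation agree := (agree S H).
Local Notation rootspace := (rootspace S H).
Local Notation is_root := (is_root S H).
Local Notation lin := (lin_on_H0 S H).
Local Notation phipow := (phipow S).

Lemma subH : subalgebra S H. Proof. by case: MAX. Qed.
Lemma H0L c x y : H0 x -> H0 y -> H0 (c *: x + y).
Proof.
case: subH => [[[_ Hs] _] _] [hx gx] [hy gy]; split; first exact: Hs.
exact: LgL.
Qed.
Lemma H00 : H0 0.
Proof. case: subH => [[[H0' _] _] _]; split=> //; exact: Lg0. Qed.
Lemma H0_phi h : H0 h -> H0 (phi h).
Proof. case: subH => _ [_ [Hp _]] [hh gh]; split; [exact: Hp | exact: phideg]. Qed.
Lemma H0_phiinv h : H0 h -> H0 (phiinv h).
Proof.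
case: subH => _ [_ [_ Hs]] [hh gh]; split; last exact: phiinv_Lg.
by have [x [Hx <-]] := Hs _ hh; rewrite phiK.
Qed.
Lemma H0_iter n h : H0 h -> H0 (iter n phiinv h).
Proof. by elim: n => //= n IH /IH; apply: H0_phiinv. Qed.

Lemma iterL n c x y : iter n phiinv (c *: x + y) = c *: iter n phiinv x + iter n phiinv y.
Proof. by elim: n => //= n ->; rewrite phiinvL. Qed.

Lemma agree_refl a : agree a a. Proof. by []. Qed.
Lemma agree_sym a b : agree a b -> agree b a. Proof. by move=> E h /E ->. Qed.
Lemma agree_trans a b c : agree a b -> agree b c -> agree a c.
Proof. by move=> E1 E2 h Hh; rewrite E1 // E2. Qed.
Lemma agree_pw a b : (forall h, a h = b h) -> agree a b. Proof. by move=> E h _. Qed.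
Lemma agree_pow a b n : agree a b -> agree (phipow a n) (phipow b n).
Proof. by move=> E h Hh; rewrite /phipow E //; apply: H0_iter. Qed.

Lemma lin_agree a b : agree a b -> lin a -> lin b.
Proof.
move=> E La c x y Hx Hy; rewrite -!E //; last exact: H0L.
exact: La.
Qed.
Lemma rs_agree a b v : agree a b -> rootspace a v -> rootspace b v.
Proof. by move=> E R h Hh; rewrite R // E. Qed.
Lemma root_agree a b : agree a b -> is_root a -> is_root b.
Proof.
move=> E [La [[h [Hh nz]] [v [nv Rv]]]]; split; first exact: lin_agree La.
split; first by exists h; rewrite -E.
by exists v; split=> //; apply: rs_agree Rv.
Qed.

Lemma lin_pow a n : lin a -> lin (phipow a n).
Proof.
move=> La c x y Hx Hy; rewrite /phipow iterL La //; exact: H0_iter.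
Qed.

Lemma root_pow1 a : is_root a -> is_root (phipow a 1).
Proof.
move=> [La [[h [Hh nz]] [v [nv Rv]]]]; split; first exact: lin_pow.
split; first by exists (phi h); split; [exact: H0_phi | rewrite /phipow /= phiK].
exists (phi v); split.
  by apply: contra nv => /eqP e; apply/eqP; apply: phi_inj; rewrite e (lin0 phiL).
move=> h' Hh'; rewrite -{1}(phiinvK h') -phibr Rv; last exact: H0_phiinv.
by rewrite (linZ phiL).
Qed.

Lemma root_pow a n : is_root a -> is_root (phipow a n).
Proof.
elim: n a => [|n IH] a Ra; first by apply: root_agree Ra; apply: agree_pw.
by apply: (IH (phipow a 1)); apply: root_pow1.
Qed.

Lemma root_comp a : is_root a -> is_root (fun h => a (phi h)).
Proof.
move=> [La [[h [Hh nz]] [v [nv Rv]]]]; split.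
  by move=> c x y Hx Hy /=; rewrite phiL La //; apply: H0_phi.
split; first by exists (phiinv h); split; [exact: H0_phiinv | rewrite phiinvK].
exists (phiinv v); split.
  by apply: contra nv => /eqP e; apply/eqP; rewrite -(phiinvK v) e (lin0 phiL).
move=> h' Hh'; rewrite -(phiK (br h' (phiinv v))) phibr phiinvK Rv; last exact: H0_phi.
by rewrite (linZ phiinvL) phiK.
Qed.

Lemma root_opp a : is_root a -> is_root (fun h => - a h).
Proof. exact: SYMR. Qed.

Lemma rs0 a : rootspace a 0.
Proof. by move=> h _; rewrite brr0 (lin0 phiL) scaler0. Qed.
Lemma rsL a c x y : rootspace a x -> rootspace a y -> rootspace a (c *: x + y).
Proof.
move=> Rx Ry h Hh; rewrite brR phiL Rx // Ry //.
by rewrite scalerDr !scalerA mulrC.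
Qed.
Lemma rsD a x y : rootspace a x -> rootspace a y -> rootspace a (x + y).
Proof. by move=> *; rewrite -[x]scale1r; apply: rsL. Qed.
Lemma rs_sum a n (F : 'I_n -> L) : (forall i, rootspace a (F i)) ->
  rootspace a (\sum_(i < n) F i).
Proof.
move=> HF; apply: (big_rec (rootspace a)); first exact: rs0.
by move=> i x _ Hx; apply: rsD.
Qed.

Lemma rs_hdec a v : rootspace a v -> exists n (g : 'I_n -> G) (w : 'I_n -> L),
    injective g /\ (forall i, Lg (g i) (w i) /\ rootspace a (w i)) /\ v = \sum_(i < n) w i.
Proof.
move=> Rv; have [n [g [w [I [Hw E]]]]] := hdec v.
exists n, g, w; split=> //; split=> // i; split=> // h Hh.
pose u j := br h (w j) - a h *: phi (w j).
have Hu : forall j, Lg (g j) (u j).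
  move=> j; rewrite /u; apply: LgD.
    by rewrite -[g j]add0r; apply: brdeg => //; case: Hh.
  by rewrite -scaleNr; apply: LgZ; apply: phideg.
have : \sum_(j < n) u j = 0.
  rewrite /u sumrB -(lin_sum (fun c x y => brR c x y h)) -scaler_sumr.
  by rewrite -(lin_sum phiL) -E Rv // subrr.
move/(graded_uniq I Hu)/(_ i)/eqP; rewrite /u subr_eq0 => /eqP //.
Qed.

Lemma rs_phiinv a v : rootspace a v -> rootspace (fun h => a (phi h)) (phiinv v).
Proof.
move=> Rv h Hh; rewrite -(phiK (br h (phiinv v))) phibr phiinvK Rv; last exact: H0_phi.
by rewrite (linZ phiinvL) phiK.
Qed.

Lemma W_hom p q b d x y : Lg p x -> Lg q y -> rootspace b x -> rootspace d y ->
  rootspace (phipow (fun h => b h + d h) 1) (br x y).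
Proof.
move=> Gx Gy Rx Ry h Hh; rewrite /phipow /=.
have Hh' := H0_phiinv Hh; have Gh' := Hh'.2.
have J := jac Gx Gy Gh'.
rewrite eps0l eps0r !scale1r phiinvK in J.
rewrite (skew Gy Gh') eps0r scale1r Ry // Rx // in J.
rewrite (linN (fun c x y => brR c x y _)) (linZ (fun c x y => brR c x y _)) in J.
rewrite (linZ (fun c x y => brR c x y _)) (skew (phideg Gy) (phideg Gx)) in J.
move/eqP: J; rewrite addrC addr_eq0 => /eqP ->.
rewrite phibr !scalerN !scalerA opprD !opprK.
rewrite mulrAC eps_sym mul1r.
by rewrite scalerDl addrC.
Qed.

Lemma br_suml n (F : 'I_n -> L) z : br (\sum_(i < n) F i) z = \sum_(i < n) br (F i) z.
Proof. exact: (lin_sum (fun c x y => brL c x y z)). Qed.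
Lemma br_sumr n (F : 'I_n -> L) z : br z (\sum_(i < n) F i) = \sum_(i < n) br z (F i).
Proof. exact: (lin_sum (fun c x y => brR c x y z)). Qed.

Lemma W_gen b d x y : rootspace b x -> rootspace d y ->
  rootspace (phipow (fun h => b h + d h) 1) (br x y).
Proof.
move=> /rs_hdec [n [g [v [_ [Hv ->]]]]] /rs_hdec [m [g' [w [_ [Hw ->]]]]].
rewrite br_suml; apply: rs_sum => i; rewrite br_sumr; apply: rs_sum => j.
by case: (Hv i) => G1 R1; case: (Hw j) => G2 R2; apply: (W_hom G1 G2).
Qed.

Lemma lin_sumf a b : lin a -> lin b -> lin (fun h => a h + b h).
Proof.
move=> La Lb c x y Hx Hy; rewrite La // Lb //.
by rewrite mulrDr !addrA (addrAC (c * a x)).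
Qed.
Lemma lin_opp a : lin a -> lin (fun h => - a h).
Proof. by move=> La c x y Hx Hy; rewrite La // opprD mulrN. Qed.
Lemma root_lin a : is_root a -> lin a. Proof. by case. Qed.

Inductive reach (a : L -> K) : (L -> K) -> Prop :=
| R0 : is_root a -> reach a a
| RE r r' : reach a r -> agree r r' -> reach a r'
| RS r b : reach a r -> is_root r -> is_root b ->
           reach a (phipow (fun h => r h + b h) 1).

Definition sg (s : bool) (f : L -> K) : L -> K := if s then (fun h => - f h) else f.

Lemma reach_root a r : reach a r -> is_root a.
Proof. by elim. Qed.

Lemma iter_comm n h : iter n phiinv (phiinv h) = phiinv (iter n phiinv h).
Proof. by rewrite -iterSr. Qed.

Lemma reach_pow s a r : reach a r -> reach (phipow a s) (phipow r s).
Proof.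
elim=> [Ra|u u' _ IH E|u b _ IH Rr Rb].
- by apply: R0; apply: root_pow.
- by apply: RE IH _; apply: agree_pow.
- apply: RE (RS IH (root_pow s Rr) (root_pow s Rb)) _.
  by apply: agree_pw => h; rewrite /phipow /= iter_comm.
Qed.

Lemma root_sg s f : is_root f -> is_root (sg s f).
Proof. by case: s => //; apply: root_opp. Qed.

Lemma reach_sg s a r : reach a r -> reach (sg s a) (sg s r).
Proof.
case: s => //=; elim=> [Ra|u u' _ IH E|u b _ IH Rr Rb].
- by apply: R0; apply: root_opp.
- by apply: RE IH _ => h /E ->.
- apply: RE (RS IH (root_opp Rr) (root_opp Rb)) _.
  by apply: agree_pw => h; rewrite /phipow /= opprD.
Qed.

Lemma reach_trans a r r' t : reach a r -> reach r' t -> agree r r' -> reach a t.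
Proof.
move=> R1 R2; elim: R2 => [_|u u' _ IH E|u b _ IH Ru Rb] E0.
- exact: RE R1 E0.
- exact: RE (IH E0) E.
- exact: RS (IH E0) Ru Rb.
Qed.

Lemma reach_rev a r : reach a r -> is_root r -> exists n, reach r (phipow a n).
Proof.
elim=> [Ra|u u' Rr IH E|u b Rr IH Rr' Rb] Rt.
- by exists 0%N; apply: RE (R0 Ra) _; apply: agree_pw.
- have [n Rn] := IH (root_agree (agree_sym E) Rt).
  by exists n; apply: reach_trans (R0 Rt) Rn (agree_sym E).
- have [n Rn] := IH Rr'.
  have st : reach (phipow (fun h => u h + b h) 1) (phipow u 2).
    apply: RE (RS (R0 Rt) Rt (root_opp (root_pow1 Rb))) _.
    by apply: agree_pw => h; rewrite /phipow /= addrK.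
  exists (n + 2)%N; apply: RE (reach_trans st (reach_pow 2 Rn) (agree_refl _)) _.
  by apply: agree_pw => h; rewrite /phipow iterD.
Qed.

Definition conn (x y : L -> K) : Prop :=
  exists a r, Defs.in_orbit S H a x /\ reach a r /\ in_pm_orbit S H r y.

Lemma pm_sg r y : in_pm_orbit S H r y <-> exists m s, agree r (sg s (phipow y m)).
Proof.
split=> [[m [E|E]]|[m [[] E]]].
- by exists m, false.
- by exists m, true.
- by exists m; right.
- by exists m; left.
Qed.

Lemma conn_sym x y : is_root y -> conn x y -> conn y x.
Proof.
move=> Ry [a [r [[n En] [R /pm_sg [m [s Es]]]]]].
have R' := reach_sg s R.
have Rr : is_root (sg s r).
  apply: (root_agree (a := phipow y m)); last exact: root_pow.
  by move=> h Hh; case: s Es R' => /= Es _; rewrite Es // ?opprK.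
have [t Rt] := reach_rev R' Rr.
exists (sg s r), (phipow (sg s a) t); split; last split => //.
  by exists m => h Hh; rewrite /sg; case: s Es {R' Rr Rt} => /= Es; rewrite Es // ?opprK.
apply/pm_sg; exists (n + t)%N, s => h Hh.
rewrite /phipow /sg; case: s {Es R' Rr Rt} => /=;
  by rewrite En ?iterD //; apply: H0_iter.
Qed.

Lemma conn_trans x y z : conn x y -> conn y z -> conn x z.
Proof.
move=> [a [r [[n En] [R /pm_sg [m [s Es]]]]]].
move=> [a' [r' [[n' En'] [R' /pm_sg [m' [s' Es']]]]]].
have R1 := reach_pow n' R.
have R2 := reach_sg s (reach_pow m R').
have R3 : reach (phipow a n') (sg s (phipow r' m)).
  apply: reach_trans R1 R2 _ => h Hh.
  rewrite /phipow Es; last by apply: H0_iter.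
  case: s Es => /= _; rewrite En'; try (by apply: H0_iter);
  by rewrite /phipow -!iterD addnC.
exists (phipow a n'), (sg s (phipow r' m)); split; last split => //.
  exists (n + n')%N => h Hh; rewrite /phipow En; last by apply: H0_iter.
  by rewrite /phipow -iterD.
apply/pm_sg; exists (m' + m)%N, (s (+) s') => h Hh.
have E2 := Es' _ (H0_iter m Hh).
rewrite /sg /phipow; case: s Es R2 R3 => /= _ _ _; case: s' Es' E2 => /= _ E2;
  rewrite /phipow in E2; by rewrite E2 /= ?opprK iterD.
Qed.

Lemma cs0 (al : nat -> L -> K) h : conn_sum S al 0 h = al 1%N h.
Proof. by rewrite /conn_sum big_geq // addr0. Qed.

Lemma cs_step (al : nat -> L -> K) i h :
  conn_sum S al i.+1 h = phipow (fun h => conn_sum S al i h + al i.+2 h) 1 h.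
Proof.
rewrite /conn_sum /phipow /= big_nat_recr //= -addrA; congr (_ + _).
  by rewrite iter_comm.
rewrite subSnn; congr (_ + _); apply: eq_big_nat => j /andP [_ Hj].
by rewrite subSn ?iter_comm // ltnW.
Qed.

Lemma cs_ext (al al' : nat -> L -> K) i :
  (forall j, (j <= i.+1)%N -> al j = al' j) ->
  forall h, conn_sum S al i h = conn_sum S al' i h.
Proof.
move=> E h; rewrite /conn_sum E //; congr (_ + _).
by apply: eq_big_nat => j /andP [_ Hj]; rewrite E.
Qed.

Lemma pm_agree r r' y : agree r r' -> in_pm_orbit S H r' y -> in_pm_orbit S H r y.
Proof. by move=> E [m [E'|E']]; exists m; [left|right]; apply: agree_trans E E'. Qed.

Lemma connected_conn x y : connected S H x y -> conn x y.
Proof.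
move=> [k [al [k1 [Rj Br]]]].
have [O P Ri] : [/\ Defs.in_orbit S H (al 1%N) x,
    in_pm_orbit S H (conn_sum S al (k - 1)) y &
    forall i, (1 <= i <= k - 2)%N -> is_root (conn_sum S al i)].
  case: Br => [[-> [O P]]|[_ [O [Ri P]]]]; last by split.
  split=> //; last by move=> i; rewrite leqn0 andbC; case: i.
  by apply: pm_agree P; apply: agree_pw => h; rewrite cs0.
exists (al 1%N), (conn_sum S al (k - 1)); split=> //; split=> //.
have : forall i, (i <= k - 1)%N -> reach (al 1%N) (conn_sum S al i).
  elim=> [_|i IH Hi].
    apply: RE (R0 (Rj _ _)) _; first by rewrite leqnn.
    by apply: agree_pw => h; rewrite cs0.
  have Hi' : (i <= k - 1)%N by apply: ltnW.
  have Rci : is_root (conn_sum S al i).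
    case: i {IH Hi Hi'} (Hi) => [_|i Hi]; last by apply: Ri; lia.
    by apply: root_agree (Rj 1%N _); [apply: agree_pw => h; rewrite cs0 | lia].
  apply: RE (RS (IH Hi') Rci (Rj i.+2 _)) _; first by lia.
  by apply: agree_pw => h; rewrite cs_step.
by apply; rewrite leqnn.
Qed.

Lemma reach_chain a r : reach a r -> exists k (al : nat -> L -> K),
  al 1%N = a /\ (forall j, (0 < j <= k.+1)%N -> is_root (al j)) /\
  (forall i, (0 < i < k)%N -> is_root (conn_sum S al i)) /\
  agree (conn_sum S al k) r.
Proof.
elim=> [Ra|u u' _ [k [al [A1 [Rj [Ri E]]]]] E'|u b _ [k [al [A1 [Rj [Ri E]]]]] Ru Rb].
- exists 0%N, (fun _ => a); split=> //; split; first by move=> j _.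
  split; first by move=> i; rewrite ltn0 andbF.
  by apply: agree_pw => h; rewrite cs0.
- by exists k, al; do 3! (split=> //); apply: agree_trans E E'.
- pose al' j := if j == k.+2 then b else al j.
  have ext : forall i, (i <= k)%N -> forall h, conn_sum S al i h = conn_sum S al' i h.
    move=> i Hi; apply: cs_ext => j Hj; rewrite /al'; case: eqP => // ej; lia.
  exists k.+1, al'; split; first by rewrite /al'.
  split.
    move=> j Hj; rewrite /al'; case: eqP => // ej; apply: Rj; lia.
  split.
    move=> i /andP [i0 ik]; case: (ltngtP i k) => [lt|gt|->]; last 1 first.
    + by apply: root_agree Ru; apply: agree_sym; apply: agree_trans E;
        apply: agree_pw => h; rewrite ext.
    + by apply: root_agree (Ri i _); [apply: agree_pw => h; rewrite ext // ltnW | lia].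
    + lia.
  move=> h Hh; rewrite cs_step /phipow /= -ext // E //; last exact: H0_phiinv.
  by rewrite /al' eqxx.
Qed.

Lemma conn_connected x y : conn x y -> connected S H x y.
Proof.
move=> [a [r [O [R P]]]].
have [k [al [A1 [Rj [Ri E]]]]] := reach_chain R.
exists k.+1, al; split=> //; split; first by move=> j Hj; apply: Rj; lia.
case: k Rj Ri E => [|k] Rj Ri E.
  left; split=> //; rewrite A1; split=> //; apply: pm_agree P.
  by apply: agree_trans E; rewrite -A1; apply: agree_pw => h; rewrite cs0.
right; split=> //; rewrite A1; split=> //; split.
  by move=> i Hi; apply: Ri; lia.
by rewrite subn1 /=; apply: pm_agree P.
Qed.

Lemma conn_base a b : is_root a -> in_pm_orbit S H a b -> conn a b.
Proof.
move=> Ra P; exists a, a; split; first by exists 0%N; apply: agree_pw.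
by split=> //; apply: R0.
Qed.

Lemma LINK b d v : is_root b -> is_root d -> v != 0 ->
  rootspace (phipow (fun h => b h + d h) 1) v -> conn b d.
Proof.
move=> Rb Rd nv Rv.
have Lm : lin (phipow (fun h => b h + d h) 1).
  by apply: lin_pow; apply: lin_sumf; apply: root_lin.
case: (classic (exists h, H0 h /\ phipow (fun h => b h + d h) 1 h != 0)) => [ex|nex].
- have Rm : is_root (phipow (fun h => b h + d h) 1) by split=> //; split=> //; exists v.
  have C1 : conn b (phipow (fun h => b h + d h) 1).
    exists b, (phipow (fun h => b h + d h) 1); split; first by exists 0%N; apply: agree_pw.
    split; first exact: RS (R0 Rb) Rb Rd.
    by exists 0%N; left; apply: agree_pw.
  have C2 : conn d (phipow (fun h => b h + d h) 1).
    exists d, (phipow (fun h => d h + b h) 1); split; first by exists 0%N; apply: agree_pw.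
    split; first exact: RS (R0 Rd) Rd Rb.
    by exists 0%N; left; apply: agree_pw => h; rewrite /phipow addrC.
  exact: conn_trans C1 (conn_sym Rm C2).
- apply: conn_base => //; exists 0%N; right => h Hh.
  have : phipow (fun h => b h + d h) 1 (phi h) = 0.
    have [//|nz] := eqVneq (phipow (fun h => b h + d h) 1 (phi h)) 0.
    by exfalso; apply: nex; exists (phi h); split=> //; exact: H0_phi.
  by rewrite /phipow /= phiK => /eqP; rewrite addr_eq0 => /eqP.
Qed.

Lemma conn_opp b : is_root b -> conn b (fun h => - b h).
Proof. by move=> Rb; apply: conn_base => //; exists 0%N; right => h _; rewrite /phipow opprK. Qed.
Lemma conn_opp' b : is_root b -> conn (fun h => - b h) b.
Proof. by move=> Rb; apply: conn_base; [exact: root_opp | exists 0%N; right => h _]. Qed.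
Lemma conn_comp d : is_root d -> conn d (fun h => d (phi h)).
Proof.
move=> Rd; apply: conn_base => //; exists 1%N; left => h _.
by rewrite /phipow /= phiinvK.
Qed.

Lemma HVcore p q r b d x y w : is_root b -> is_root d -> ~ conn b d ->
  Lg p x -> Lg q y -> Lg r w ->
  rootspace b x -> rootspace (fun h => - b h) y -> rootspace d w ->
  br w (br x y) = 0.
Proof.
move=> Rb Rd NC Gx Gy Gw Rx Ry Rw.
have Gw0 := phiinv_Lg Gw; have Rw0 := rs_phiinv Rw.
have Rd' := root_comp Rd.
have E1 : br y (phiinv w) = 0.
  have [//|N1] := eqVneq (br y (phiinv w)) 0; exfalso; apply: NC.
  have C := LINK (root_opp Rb) Rd' N1 (W_hom Gy Gw0 Ry Rw0).
  apply: conn_trans (conn_opp Rb) (conn_trans C _).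
  exact: conn_sym Rd' (conn_comp Rd).
have E2 : br (phiinv w) x = 0.
  have [//|N2] := eqVneq (br (phiinv w) x) 0; exfalso; apply: NC.
  have C := LINK Rd' Rb N2 (W_hom Gw0 Gx Rw0 Rx).
  exact: conn_sym Rb (conn_trans (conn_comp Rd) C).
have J := jac Gx Gy Gw0.
rewrite E1 E2 !brr0 !scaler0 !add0r phiinvK in J.
by move/eqP: J; rewrite scaler_eq0 (negbTE (eps_nz _ _)) => /eqP.
Qed.

Lemma HVgen b d x y w : is_root b -> is_root d -> ~ conn b d ->
  rootspace b x -> rootspace (fun h => - b h) y -> rootspace d w ->
  br w (br x y) = 0 /\ br (br x y) w = 0.
Proof.
move=> Rb Rd NC /rs_hdec [n [g [X [_ [HX ->]]]]] /rs_hdec [m [g' [Y [_ [HY ->]]]]]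
  /rs_hdec [l [g'' [W [_ [HW ->]]]]].
split.
  rewrite br_suml; apply: big1 => k _; rewrite br_suml br_sumr; apply: big1 => i _.
  rewrite br_sumr br_sumr; apply: big1 => j _.
  case: (HX i) => G1 R1; case: (HY j) => G2 R2; case: (HW k) => G3 R3.
  exact: HVcore Rb Rd NC G1 G2 G3 R1 R2 R3.
rewrite br_sumr; apply: big1 => k _.
rewrite br_suml br_suml; apply: big1 => i _.
rewrite br_sumr br_suml; apply: big1 => j _.
case: (HX i) => G1 R1; case: (HY j) => G2 R2; case: (HW k) => G3 R3.
rewrite (skew (brdeg G1 G2) G3) (HVcore Rb Rd NC G1 G2 G3 R1 R2 R3).
by rewrite scaler0 oppr0.
Qed.

Lemma HHcore p q p' q' b d x y x' y' : is_root b -> is_root d -> ~ conn b d ->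
  Lg p x -> Lg q y -> Lg p' x' -> Lg q' y' ->
  rootspace b x -> rootspace (fun h => - b h) y ->
  rootspace d x' -> rootspace (fun h => - d h) y' ->
  br (br x y) (br x' y') = 0.
Proof.
move=> Rb Rd NC Gx Gy Gx' Gy' Rx Ry Rx' Ry'.
have Rb' := root_comp Rb.
have Cb : conn b (fun h => b (phi h)) := conn_comp Rb.
have N1 : ~ conn (fun h => b (phi h)) (fun h => - d h).
  by move=> C; apply: NC; apply: conn_trans Cb (conn_trans C (conn_opp' Rd)).
have N2 : ~ conn (fun h => b (phi h)) d.
  by move=> C; apply: NC; apply: conn_trans Cb C.
have R0' := rs_phiinv Rx; have R1' := rs_phiinv Ry.
have [E1 _] := HVgen Rb' (root_opp Rd) N1 R0' R1' Ry'.
have [_ E2] := HVgen Rb' Rd N2 R0' R1' Rx'.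
have Gu := brdeg (phiinv_Lg Gx) (phiinv_Lg Gy).
have J := jac Gx' Gy' Gu.
rewrite E1 E2 !brr0 !scaler0 !add0r phibr !phiinvK in J.
by move/eqP: J; rewrite scaler_eq0 (negbTE (eps_nz _ _)) => /eqP.
Qed.

Lemma lin_sum0 (f : L -> L) : (forall c x y, f (c *: x + y) = c *: f x + f y) ->
  forall n (F : 'I_n -> L), (forall i, f (F i) = 0) -> f (\sum_(i < n) F i) = 0.
Proof. by move=> fL n F HF; rewrite (lin_sum fL); apply: big1 => i _. Qed.

Lemma linAA z w c x y : br (br (c *: x + y) z) w = c *: br (br x z) w + br (br y z) w.
Proof. by rewrite !brL. Qed.
Lemma linBB x w c y y' : br (br x (c *: y + y')) w = c *: br (br x y) w + br (br x y') w.
Proof. by rewrite brR brL. Qed.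
Lemma linCC u z c x y : br u (br (c *: x + y) z) = c *: br u (br x z) + br u (br y z).
Proof. by rewrite brL brR. Qed.
Lemma linD' u x c y y' : br u (br x (c *: y + y')) = c *: br u (br x y) + br u (br x y').
Proof. by rewrite !brR. Qed.

Lemma HHgen b d x y x' y' : is_root b -> is_root d -> ~ conn b d ->
  rootspace b x -> rootspace (fun h => - b h) y ->
  rootspace d x' -> rootspace (fun h => - d h) y' ->
  br (br x y) (br x' y') = 0.
Proof.
move=> Rb Rd NC /rs_hdec [n [g [X [_ [HX ->]]]]] /rs_hdec [m [g' [Y [_ [HY ->]]]]]
  /rs_hdec [l [g'' [X' [_ [HX' ->]]]]] /rs_hdec [o [g3 [Y' [_ [HY' ->]]]]].
apply: (lin_sum0 (linAA _ _)) => i; apply: (lin_sum0 (linBB _ _)) => j.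
apply: (lin_sum0 (linCC _ _)) => k; apply: (lin_sum0 (linD' _ _)) => t.
case: (HX i) => G1 R1; case: (HY j) => G2 R2; case: (HX' k) => G3 R3; case: (HY' t) => G4 R4.
exact: HHcore Rb Rd NC G1 G2 G3 G4 R1 R2 R3 R4.
Qed.

Lemma span0 (P Q : L -> Prop) : (forall p q, P p -> Q q -> br p q = 0) ->
  forall x y, spanP P x -> spanP Q y -> br x y = 0.
Proof.
move=> HPQ x y [n [cs [v [Hv ->]]]] [m [es [w [Hw ->]]]].
apply: (lin_sum0 (fun c x z => brL c x z _)) => i.
rewrite (linZ (fun c x z => brL c x z _)); apply/eqP; rewrite scaler_eq0; apply/orP; right.
apply/eqP; apply: (lin_sum0 (fun c x z => brR c x z _)) => j.
by rewrite (linZ (fun c x z => brR c x z _)) HPQ // scaler0.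
Qed.

Lemma main_sec a c : is_root a -> is_root c -> ~ root_class S H a c ->
  forall x y, L_class S H a x -> L_class S H c y -> br x y = 0.
Proof.
move=> Ra Rc NRC.
have NC : ~ conn c a by move=> C; apply: NRC; split=> //; apply: conn_connected.
have Key : forall b d, root_class S H a b -> root_class S H c d -> ~ conn b d.
  move=> b d [Rb Cb] [Rd Cd] C; apply: NC.
  apply: conn_trans (conn_sym Rc (connected_conn Cd)) _.
  exact: conn_trans (conn_sym Rd C) (connected_conn Cb).
move=> x y [hx [vx [Hx [Vx ->]]]] [hy [vy [Hy [Vy ->]]]].
rewrite (linD (fun c x z => brL c x z _)) !(linD (fun c x z => brR c x z _)).
have -> : br hx hy = 0.
  apply: (span0 _ Hx Hy) => p q [b [x1 [y1 [Cb [R1 [R2 ->]]]]]] [d [x2 [y2 [Cd [R3 [R4 ->]]]]]].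
  exact: HHgen Cb.1 Cd.1 (Key _ _ Cb Cd) R1 R2 R3 R4.
have -> : br hx vy = 0.
  apply: (span0 _ Hx Vy) => p q [b [x1 [y1 [Cb [R1 [R2 ->]]]]]] [d [Cd Rq]].
  exact: (HVgen Cb.1 Cd.1 (Key _ _ Cb Cd) R1 R2 Rq).2.
have -> : br vx hy = 0.
  apply: (span0 _ Vx Hy) => p q [b [Cb Rp]] [d [x2 [y2 [Cd [R3 [R4 ->]]]]]].
  have N : ~ conn d b by move=> C; apply: (Key _ _ Cb Cd); apply: conn_sym Cb.1 C.
  exact: (HVgen Cd.1 Cb.1 N R3 R4 Rp).1.
have -> : br vx vy = 0.
  apply: (span0 _ Vx Vy) => p q [b [Cb Rp]] [d [Cd Rq]].
  have [//|N] := eqVneq (br p q) 0; exfalso.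
  exact: (Key _ _ Cb Cd) (LINK Cb.1 Cd.1 N (W_gen Rp Rq)).
by rewrite !addr0.
Qed.

End Proof.

Theorem mainTheorem8 (K : fieldType) (G : zmodType) (L : lmodType K)
  (S : @HLCdata K G L) (H : L -> Prop) :
  HomLieColor S -> regular S -> max_abelian_subalgebra S H ->
  split_alg S H -> symmetric_roots S H ->
  forall a c : L -> K, is_root S H a -> is_root S H c ->
  ~ root_class S H a c ->
  forall x y, L_class S H a x -> L_class S H c y -> br S x y = 0.
Proof.
move=> HLC REG MAX _ SYM a c Ra Rc NRC x y Hx Hy.
exact: (main_sec HLC REG MAX SYM Ra Rc NRC Hx Hy).
Qed.
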